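(* Let $(I,\leq)$ and $(J,\preccurlyeq)$ be finite posets, $\mathcal P\colon J^{\mathrm{op}}\to\mathrm{Fun}(I,\mathrm{vect}_K)$ a functor and $M\colon I\to\mathrm{vect}_K$ a functor. (1) If $\mathcal P$ is thin, then $\beta^0_{\mathcal P}M(\mathcal P(a))=\beta^0(\mathcal RM)(a)$ for every $a\in J$ with $\mathcal P(a)\neq0$. (2) If $\mathcal P$ is flat, then $\beta^d_{\mathcal P}M(\mathcal P(a))=\beta^d(\mathcal RM)(a)$ for every $d\geq0$ and every $a\in J$ with $\mathcal P(a)\neq0$.
   Context: $K$ is a field, $\mathrm{vect}_K$ finite-dimensional $K$-vector spaces, $\mathrm{Fun}(I,\mathrm{vect}_K)$ the abelian category of functors $I\to\mathrm{vect}_K$ (hom sets $\mathrm{Nat}_I$). For $a\in J$, $K(a,-)\colon J\to\mathrm{vect}_K$ is the free functor ($K(a,b)=K$ if $a\preccurlyeq b$, else $0$, identity transitions between nonzero values). $\mathcal RM=\mathrm{Nat}_I(\mathcal P(-),M)$ defines $\mathcal R\colon\mathrm{Fun}(I,\mathrm{vect}_K)\to\mathrm{Fun}(J,\mathrm{vect}_K)$ with left adjoint $\mathcal L$ (given by $\mathcal LF=\mathrm{colim}\big(\bigoplus_{a_0\prec a_1}\mathcal P(a_1)\otimes F(a_0)\rightrightarrows\bigoplus_a\mathcal P(a)\otimes F(a)\big)$); $\eta_a\colon K(a,-)\to\mathcal R\mathcal LK(a,-)$ is the unit. $\mathcal P$ is thin if every $\eta_a$ is pointwise surjective, flat if $\eta_a$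 is an isomorphism whenever $\mathcal P(a)\neq0$ (flat implies thin). Standard Betti diagrams: every $F\colon J\to\mathrm{vect}_K$ has a minimal projective resolution, unique up to isomorphism, with $d$-th term $\bigoplus_{b\in J}K(b,-)^{\beta^dF(b)}$, defining $\beta^dF\colon J\to\mathbb N$. Relative Betti diagrams: for the collection $\mathcal P=\{\mathcal P(a)\mid a\in J,\ \mathcal P(a)\neq 0\}$, a $\mathcal P$-epimorphism is a morphism $f$ with $\hom(A,f)$ surjective for all $A\in\mathcal P$; $\mathcal P$-projective, $\mathcal P$-exact, (minimal) $\mathcal P$-covers and (minimal) $\mathcal P$-resolutions are defined relative to these as usual (a minimal $\mathcal P$-resolution is a $\mathcal P$-exact sequence $\cdots\to C_1\to C_0\to M\to 0$ of $\mathcal P$-projectives in which each $C_d\to\ker(C_{d-1}\to C_{d-2})$ is a minimal $\mathcal P$-cover, i.e.\ one whose endomorphisms over the target are all isomorphisms). When $\mathcal P$ is thin, every $M$ has a minimal $\mathcal P$-resolution, unique up to isomorphism, each $C_d$ is isomorphic to $\bigoplus_{A\in\mathcal P}A^{\beta^d_{\mathcal P}M(A)}$ for a unique finitely supported $\beta^d_{\mathcal P}M\colon\mathcal P\to\mathbb N$, the $d$-th $\mathcal P$-Betti diagram of $M$. *)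

(* Defs.v *)
From HB Require Import structures.
From mathcomp Require Import all_boot all_order all_algebra.

Set Implicit Arguments.
Unset Strict Implicit.
Unset Printing Implicit Defensive.

Import Order.TTheory GRing.Theory.
Local Open Scope ring_scope.

Section Reps.
Variable K : fieldType.

(* A functor X -> vect_K on a finite poset X, in coordinates: a dimension
   at each point and, for x <= y, the transition matrix acting on row
   vectors (v |-> v *m rmap x y).  Values of rmap on incomparable pairs are
   irrelevant junk. *)
Record rep (d : Order.disp_t) (X : finPOrderType d) := Rep {
  rdim : X -> nat;
  rmap : forall x y : X, 'M[K]_(rdim x, rdim y);
  rmap_id : forall x, rmap x x = 1%:M;
  rmap_comp : forall x y z, (x <= y)%O -> (y <= z)%O ->
      rmap x z = rmap x y *m rmap y z }.

Variables (d : Order.disp_t) (X : finPOrderType d).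

Definition rhom (F G : rep X) := forall x : X, 'M[K]_(rdim F x, rdim G x).

Definition natural (F G : rep X) (f : rhom F G) : Prop :=
  forall x y : X, (x <= y)%O -> rmap F x y *m f y = f x *m rmap G x y.

Definition comp (F G H : rep X) (f : rhom F G) (g : rhom G H) : rhom F H :=
  fun x => f x *m g x.
Definition idh (F : rep X) : rhom F F := fun x => 1%:M.
Definition zeroh (F G : rep X) : rhom F G := fun x => 0.
Definition heq (F G : rep X) (f g : rhom F G) : Prop := forall x, f x = g x.

Definition is_iso (F G : rep X) (f : rhom F G) : Prop :=
  exists g : rhom G F, natural g /\ heq (comp f g) (idh F) /\ heq (comp g f) (idh G).

Definition nonzero (F : rep X) : Prop := exists x, rdim F x != 0%N.

(* the free functor K(b,-) *)
Definition free_dim (b : X) (c : X) : nat := (b <= c)%O.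

Lemma free_map_id (b : X) (c : X) :
  (const_mx 1 : 'M[K]_(free_dim b c, free_dim b c)) = 1%:M.
Proof.
rewrite /free_dim; case: (b <= c)%O => /=.
  by apply/matrixP => i j; rewrite !mxE !ord1.
by apply/matrixP => i; case: i.
Qed.

Lemma free_map_comp (b x y z : X) : (x <= y)%O -> (y <= z)%O ->
  (const_mx 1 : 'M[K]_(free_dim b x, free_dim b z)) =
  (const_mx 1 : 'M[K]_(free_dim b x, free_dim b y)) *m const_mx 1.
Proof.
move=> hxy hyz; rewrite /free_dim.
case hbx: (b <= x)%O => /=.
  have hby : (b <= y)%O by apply: le_trans hxy.
  have hbz : (b <= z)%O by apply: le_trans hyz.
  rewrite hby hbz /=; apply/matrixP => i j.
  by rewrite !mxE big_ord1 !mxE mulr1.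
by apply/matrixP => i; case: i.
Qed.

Definition free_rep (b : X) : rep X :=
  @Rep d X (free_dim b) (fun x y => const_mx 1) (free_map_id b)
       (@free_map_comp b).

(* B is (isomorphic to) the direct sum of Q l ^ (n l), l ranging over L,
   expressed by the biproduct equations *)
Definition is_biprod (L : finType) (Q : L -> rep X) (n : L -> nat) (B : rep X)
  : Prop :=
  exists (iota : forall l, 'I_(n l) -> rhom (Q l) B)
         (pi : forall l, 'I_(n l) -> rhom B (Q l)),
    (forall l i, natural (iota l i) /\ natural (pi l i)) /\
    (forall l i j, heq (comp (iota l i) (pi l j))
                       (if i == j then idh (Q l) else zeroh (Q l) (Q l))) /\
    (forall l l' i j, l != l' -> heq (comp (iota l i) (pi l' j)) (zeroh _ _)) /\
    (forall x, \sum_(l : L) \sum_(i < n l) (pi l i x *m iota l i x) = 1%:M).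

(* target and outgoing map of the d-th term of a resolution
   ... -> C 1 -> C 0 -> N -> 0 *)
Definition res_tgt (N : rep X) (C : nat -> rep X) (n : nat) : rep X :=
  if n is n'.+1 then C n' else N.

Definition res_out (N : rep X) (C : nat -> rep X) (eps : rhom (C 0%N) N)
  (dd : forall n, rhom (C n.+1) (C n)) (n : nat) : rhom (C n) (res_tgt N C n) :=
  match n as n0 return rhom (C n0) (res_tgt N C n0) with
  | 0%N => eps
  | n'.+1 => dd n'
  end.

(* Minimal Q-resolution of N (relative homological algebra w.r.t. the
   collection {Q l}):  each term is a finite direct sum of the Q l with
   multiplicities mult n; the sequence is a complex which is Q-exact
   (Hom(Q l, -) exact); each C n -> ker(...) is a Q-epimorphism and a
   minimal Q-cover (endomorphisms over the target are isomorphisms). *)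
Definition is_min_res (L : finType) (Q : L -> rep X) (N : rep X)
  (C : nat -> rep X) (mult : nat -> L -> nat)
  (dd : forall n, rhom (C n.+1) (C n)) (eps : rhom (C 0%N) N) : Prop :=
  [/\ (forall n, is_biprod Q (mult n) (C n)) /\
        (natural eps /\ forall n, natural (dd n)),
      forall n, heq (comp (dd n) (res_out eps dd n)) (zeroh _ _),
      forall l (g : rhom (Q l) N), natural g ->
        exists h : rhom (Q l) (C 0%N), natural h /\ heq (comp h eps) g,
      forall n l (g : rhom (Q l) (C n)), natural g ->
        heq (comp g (res_out eps dd n)) (zeroh _ _) ->
        exists h : rhom (Q l) (C n.+1), natural h /\ heq (comp h (dd n)) g
    & forall n (e : rhom (C n) (C n)), natural e ->
        heq (comp e (res_out eps dd n)) (res_out eps dd n) -> is_iso e].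

End Reps.

Arguments is_min_res [K d X L] Q N C mult dd eps.


Section Cofunctor.
Variable K : fieldType.
Variables (dI : Order.disp_t) (I : finPOrderType dI).
Variables (dJ : Order.disp_t) (J : finPOrderType dJ).

Record cofunctor := Cofunctor {
  pobj : J -> rep K I;
  pmap : forall a b : J, rhom (pobj b) (pobj a);
  pmap_nat : forall a b, (a <= b)%O -> natural (pmap a b);
  pmap_id : forall a, heq (pmap a a) (idh _);
  pmap_comp : forall a b c, (a <= b)%O -> (b <= c)%O ->
      heq (pmap a c) (comp (pmap b c) (pmap a b)) }.

(* Unit eta_a : K(a,-) -> R L K(a,-), using L K(a,-) = P(a); at b it is
   K(a,b) -> Nat_I(P(b),P(a)), 1 |-> P(a <= b).  [eta_surj P a b] says
   it is surjective at b, [eta_inj P a b] injective at b. *)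
Definition eta_surj (P : cofunctor) (a b : J) : Prop :=
  forall f : rhom (pobj P b) (pobj P a), natural f ->
    ((a <= b)%O -> exists k : K, heq f (fun x => k *: pmap P a b x)) /\
    (~~ (a <= b)%O -> heq f (zeroh _ _)).

Definition eta_inj (P : cofunctor) (a b : J) : Prop :=
  (a <= b)%O -> ~ heq (pmap P a b) (zeroh _ _).

Definition thin (P : cofunctor) : Prop := forall a b, eta_surj P a b.

Definition flat (P : cofunctor) : Prop :=
  forall a, nonzero (pobj P a) -> forall b, eta_surj P a b /\ eta_inj P a b.

(* G : J -> vect_K is (isomorphic to) R M = Nat_I(P(-), M), via the family
   of linear isomorphisms phi b : K^{dim G b} -> Nat_I(P(b), M), natural
   in b (R M (b <= b') is precomposition with P(b <= b')). *)
Definition represents_R (P : cofunctor) (M : rep K I) (G : rep K J)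
  (phi : forall b : J, 'rV[K]_(rdim G b) -> rhom (pobj P b) M) : Prop :=
  [/\ forall b v, natural (phi b v),
      forall b (k : K) v w,
        heq (phi b (k *: v + w)) (fun x => k *: phi b v x + phi b w x),
      forall b v, heq (phi b v) (zeroh _ _) -> v = 0,
      forall b (f : rhom (pobj P b) M), natural f -> exists v, heq (phi b v) f
    & forall b b' v, (b <= b')%O ->
        heq (phi b' (v *m rmap G b b')) (fun x => pmap P b b' x *m phi b v x)].

End Cofunctor.

Arguments represents_R [K dI I dJ J] P M G phi.

(* Main.v *)
Require Import Defs.
From HB Require Import structures.
From mathcomp Require Import all_boot all_order all_algebra.
From Stdlib Require Import FunctionalExtensionality ClassicalEpsilon.

Set Implicit Arguments.
Unset Strict Implicit.
Unset Printing Implicit Defensive.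
Import Order.TTheory GRing.Theory.
Local Open Scope ring_scope.

Notation hcomp := Defs.comp.

Section Gen.
Variable K : fieldType.
Variables (dX : Order.disp_t) (X : finPOrderType dX).

Lemma heqE (F G : rep K X) (f g : rhom F G) : heq f g -> f = g.
Proof. exact: functional_extensionality_dep. Qed.

Definition hadd (F G : rep K X) (f g : rhom F G) : rhom F G := fun x => f x + g x.
Definition hscale (F G : rep K X) (k : K) (f : rhom F G) : rhom F G := fun x => k *: f x.
Definition hsum (F G : rep K X) (I : finType) (P : pred I) (f : I -> rhom F G)
  : rhom F G := fun x => \sum_(i | P i) f i x.

Definition nzb (F : rep K X) : bool := [exists x, rdim F x != 0%N].

Lemma nzbP (F : rep K X) : reflect (nonzero F) (nzb F).
Proof. by apply: (iffP existsP) => -[x hx]; exists x. Qed.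

Lemma rhom_to_zero (F G : rep K X) (f g : rhom F G) : ~~ nzb G -> f = g.
Proof.
move=> h; apply: heqE => x; apply/matrixP => i j; exfalso.
move: h; rewrite negb_exists => /forallP /(_ x); rewrite negbK => /eqP e.
by move: (ltn_ord j); move: (nat_of_ord j) => n; rewrite e.
Qed.

Lemma rhom_from_zero (F G : rep K X) (f g : rhom F G) : ~~ nzb F -> f = g.
Proof.
move=> h; apply: heqE => x; apply/matrixP => i j; exfalso.
move: h; rewrite negb_exists => /forallP /(_ x); rewrite negbK => /eqP e.
by move: (ltn_ord i); move: (nat_of_ord i) => n; rewrite e.
Qed.

Lemma scale_idh_eq0 (F : rep K X) (k : K) :
  nzb F -> hscale k (idh F) = zeroh F F -> k = 0.
Proof.
case/existsP => x hx /(congr1 (fun f => f x)) /matrixP.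
have i : 'I_(rdim F x) by exists 0%N; rewrite lt0n.
by move/(_ i i); rewrite !mxE eqxx mulr1.
Qed.

Lemma hcompA (F G H L : rep K X) (f : rhom F G) (g : rhom G H) (h : rhom H L) :
  hcomp (hcomp f g) h = hcomp f (hcomp g h).
Proof. by apply: heqE => x; rewrite /Defs.comp mulmxA. Qed.
Lemma hcomp_idl (F G : rep K X) (f : rhom F G) : hcomp (idh F) f = f.
Proof. by apply: heqE => x; rewrite /Defs.comp /idh mul1mx. Qed.
Lemma hcomp_idr (F G : rep K X) (f : rhom F G) : hcomp f (idh G) = f.
Proof. by apply: heqE => x; rewrite /Defs.comp /idh mulmx1. Qed.
Lemma hcomp0l (F G H : rep K X) (f : rhom G H) : hcomp (zeroh F G) f = zeroh F H.
Proof. by apply: heqE => x; rewrite /Defs.comp /zeroh mul0mx. Qed.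
Lemma hcomp0r (F G H : rep K X) (f : rhom F G) : hcomp f (zeroh G H) = zeroh F H.
Proof. by apply: heqE => x; rewrite /Defs.comp /zeroh mulmx0. Qed.
Lemma hcompDl (F G H : rep K X) (f g : rhom F G) (h : rhom G H) :
  hcomp (hadd f g) h = hadd (hcomp f h) (hcomp g h).
Proof. by apply: heqE => x; rewrite /Defs.comp /hadd mulmxDl. Qed.
Lemma hcompDr (F G H : rep K X) (f : rhom F G) (g h : rhom G H) :
  hcomp f (hadd g h) = hadd (hcomp f g) (hcomp f h).
Proof. by apply: heqE => x; rewrite /Defs.comp /hadd mulmxDr. Qed.
Lemma hcompZl (F G H : rep K X) k (f : rhom F G) (h : rhom G H) :
  hcomp (hscale k f) h = hscale k (hcomp f h).
Proof. by apply: heqE => x; rewrite /Defs.comp /hscale scalemxAl. Qed.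
Lemma hcompZr (F G H : rep K X) k (f : rhom F G) (h : rhom G H) :
  hcomp f (hscale k h) = hscale k (hcomp f h).
Proof. by apply: heqE => x; rewrite /Defs.comp /hscale scalemxAr. Qed.
Lemma hcomp_suml (F G H : rep K X) (I : finType) (P : pred I) (f : I -> rhom F G)
  (h : rhom G H) : hcomp (hsum P f) h = hsum P (fun i => hcomp (f i) h).
Proof. by apply: heqE => x; rewrite /Defs.comp /hsum mulmx_suml. Qed.
Lemma hcomp_sumr (F G H : rep K X) (I : finType) (P : pred I) (f : rhom F G)
  (h : I -> rhom G H) : hcomp f (hsum P h) = hsum P (fun i => hcomp f (h i)).
Proof. by apply: heqE => x; rewrite /Defs.comp /hsum mulmx_sumr. Qed.

Lemma hscale0 (F G : rep K X) (f : rhom F G) : hscale 0 f = zeroh F G.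
Proof. by apply: heqE => x; rewrite /hscale scale0r. Qed.
Lemma hscale1 (F G : rep K X) (f : rhom F G) : hscale 1 f = f.
Proof. by apply: heqE => x; rewrite /hscale scale1r. Qed.
Lemma hscaler0 (F G : rep K X) k : hscale k (zeroh F G) = zeroh F G.
Proof. by apply: heqE => x; rewrite /hscale /zeroh scaler0. Qed.
Lemma hadd0l (F G : rep K X) (f : rhom F G) : hadd (zeroh F G) f = f.
Proof. by apply: heqE => x; rewrite /hadd /zeroh add0r. Qed.
Lemma hadd0r (F G : rep K X) (f : rhom F G) : hadd f (zeroh F G) = f.
Proof. by apply: heqE => x; rewrite /hadd /zeroh addr0. Qed.

Lemma natural_comp (F G H : rep K X) (f : rhom F G) (g : rhom G H) :
  natural f -> natural g -> natural (hcomp f g).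
Proof.
move=> nf ng x y le; rewrite /Defs.comp mulmxA nf // -!mulmxA ng //.
Qed.
Lemma natural_id (F : rep K X) : natural (idh F).
Proof. by move=> x y _; rewrite /idh mulmx1 mul1mx. Qed.
Lemma natural_zero (F G : rep K X) : natural (zeroh F G).
Proof. by move=> x y _; rewrite /zeroh mulmx0 mul0mx. Qed.
Lemma natural_add (F G : rep K X) (f g : rhom F G) :
  natural f -> natural g -> natural (hadd f g).
Proof. by move=> nf ng x y le; rewrite /hadd mulmxDr mulmxDl nf // ng. Qed.
Lemma natural_scale (F G : rep K X) k (f : rhom F G) :
  natural f -> natural (hscale k f).
Proof. by move=> nf x y le; rewrite /hscale -scalemxAr -scalemxAl nf. Qed.
Lemma natural_sum (F G : rep K X) (I : finType) (P : pred I) (f : I -> rhom F G) :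
  (forall i, P i -> natural (f i)) -> natural (hsum P f).
Proof.
move=> nf x y le; rewrite /hsum mulmx_sumr mulmx_suml.
by apply: eq_bigr => i Pi; rewrite nf.
Qed.

End Gen.

Lemma dchoice (A : Type) (B : A -> Type) (R : forall a, B a -> Prop) :
  (forall a, exists y, R a y) -> exists f : forall a, B a, forall a, R a (f a).
Proof.
move=> h.
have inh : forall a, inhabited (B a) by move=> a; case: (h a) => y _; constructor.
exists (fun a => epsilon (inh a) (R a)) => a; exact: epsilon_spec.
Qed.

Lemma eq_hsum (K : fieldType) (dX : Order.disp_t) (X : finPOrderType dX)
  (F G : rep K X) (I : finType) (P : pred I) (f f' : I -> rhom F G) :
  (forall i, P i -> f i = f' i) -> hsum P f = hsum P f'.
Proof. by move=> e; apply: heqE => x; apply: eq_bigr => i Pi; rewrite e. Qed.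

Lemma hsum_big (K : fieldType) (dX : Order.disp_t) (X : finPOrderType dX)
  (F G : rep K X) (I : finType) (P : pred I) (f : I -> rhom F G) :
  hsum P f = \big[@hadd _ _ _ F G/zeroh F G]_(i | P i) f i.
Proof.
apply: heqE => x; rewrite /hsum.
by elim/big_rec2: _ => //= i y1 y2 _ ->.
Qed.

Section LinSum.
Variable K : fieldType.
Variables (dX : Order.disp_t) (X : finPOrderType dX) (dY : Order.disp_t) (Y : finPOrderType dY).
Variables (F G : rep K X) (F' G' : rep K Y) (L : rhom F G -> rhom F' G').
Hypothesis hlin : forall k g h, natural g -> natural h ->
  L (hadd (hscale k g) h) = hadd (hscale k (L g)) (L h).

Lemma lin_zero : L (zeroh _ _) = zeroh _ _.
Proof.
have := hlin 1 (natural_zero F G) (natural_zero F G); rewrite !hscale1 hadd0r => e.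
apply: heqE => x; have := congr1 (fun f => f x) e; rewrite /hadd /zeroh.
by rewrite -{1}(addr0 (L _ x)) => /addrI <-.
Qed.

Lemma lin_scale k g : natural g -> L (hscale k g) = hscale k (L g).
Proof.
by move=> ng; have := hlin k ng (natural_zero F G); rewrite !hadd0r lin_zero hadd0r.
Qed.

Lemma lin_sum (I : finType) (P : pred I) (f : I -> rhom F G) :
  (forall i, P i -> natural (f i)) -> L (hsum P f) = hsum P (fun i => L (f i)).
Proof.
move=> hf; rewrite !hsum_big.
suff [] : natural (\big[@hadd _ _ _ F G/zeroh _ _]_(i | P i) f i) /\
  L (\big[@hadd _ _ _ F G/zeroh _ _]_(i | P i) f i) =
  \big[@hadd _ _ _ F' G'/zeroh _ _]_(i | P i) L (f i) by [].
apply: (big_rec2 (fun y1 y2 => natural y1 /\ L y1 = y2)).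
  by split; [exact: natural_zero | exact: lin_zero].
move=> i y1 y2 Pi [Hy e]; split; first by apply: natural_add => //; apply: hf.
by have := hlin 1 (hf i Pi) Hy; rewrite !hscale1 e.
Qed.

End LinSum.

Set Implicit Arguments.
Unset Strict Implicit.
Unset Printing Implicit Defensive.
Import Order.TTheory GRing.Theory.
Local Open Scope ring_scope.

Section Side.
Variable K : fieldType.
Variables (dX : Order.disp_t) (X : finPOrderType dX).
Variables (dJ : Order.disp_t) (J : finPOrderType dJ).

Record side_ax (Q : J -> rep K X) (rho : forall l b : J, rhom (Q b) (Q l)) : Prop :=
 SideAx {
  sd_nat : forall l b, (l <= b)%O -> natural (rho l b);
  sd_id : forall b, rho b b = idh (Q b);
  sd_comp : forall l b a, (l <= b)%O -> (b <= a)%O ->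
     rho l a = hcomp (rho b a) (rho l b);
  sd_thin : forall l b (h : rhom (Q b) (Q l)), natural h ->
     ((l <= b)%O -> exists k, h = hscale k (rho l b)) /\
     (~~ (l <= b)%O -> h = zeroh _ _) }.

Definition side_flat (Q : J -> rep K X) (rho : forall l b : J, rhom (Q b) (Q l)) :=
  forall l b, (l <= b)%O -> nzb (Q l) -> rho l b <> zeroh _ _.

Variables (Q : J -> rep K X) (rho : forall l b : J, rhom (Q b) (Q l)).

Definition hcoef l b (h : rhom (Q b) (Q l)) : K :=
  if (l <= b)%O && nzb (Q l) then
    epsilon (inhabits 0) (fun k => h = hscale k (rho l b)) else 0.

Lemma hcoef0 l b (h : rhom (Q b) (Q l)) : ~~ ((l <= b)%O && nzb (Q l)) -> hcoef h = 0.
Proof. by rewrite /hcoef => /negbTE ->. Qed.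

Hypothesis hs : side_ax rho.

Lemma hcoefP l b (h : rhom (Q b) (Q l)) : natural h -> h = hscale (hcoef h) (rho l b).
Proof.
move=> nh; have [th1 th2] := sd_thin hs nh.
rewrite /hcoef; case: ifP => [/andP [lb nz]|].
  by apply: (epsilon_spec (inhabits 0) (fun k => h = hscale k (rho l b))); apply: th1.
case lb: (l <= b)%O => /= nz.
  by apply: rhom_to_zero; rewrite nz.
by rewrite hscale0; apply: th2; rewrite lb.
Qed.

Hypothesis hf : side_flat rho.

Lemma hcoef_scale l b k : (l <= b)%O -> nzb (Q l) -> hcoef (hscale k (rho l b)) = k.
Proof.
move=> lb nz.
have nh : natural (hscale k (rho l b)) by apply/natural_scale/(sd_nat hs).
have := hcoefP nh; set k' := hcoef _ => e.
apply/eqP; apply: contraT => ne; exfalso; apply: (hf lb nz).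
apply: heqE => x; have := congr1 (fun f => f x) e; rewrite /hscale /zeroh => /eqP.
rewrite -subr_eq0 -scalerBl scaler_eq0 subr_eq0 eq_sym (negbTE ne) /=.
by move/eqP.
Qed.

Lemma hcoef_lin l b k (g h : rhom (Q b) (Q l)) : natural g -> natural h ->
  hcoef (hadd (hscale k g) h) = k * hcoef g + hcoef h.
Proof.
move=> ng nh; case c: ((l <= b)%O && nzb (Q l)); last first.
  by rewrite !hcoef0 ?c // mulr0 addr0.
case/andP: c => lb nz.
rewrite {1}(hcoefP ng) {1}(hcoefP nh).
have -> : hadd (hscale k (hscale (hcoef g) (rho l b))) (hscale (hcoef h) (rho l b))
  = hscale (k * hcoef g + hcoef h) (rho l b).
  by apply: heqE => x; rewrite /hadd /hscale scalerDl scalerA.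
by rewrite hcoef_scale.
Qed.

Lemma hcoef_zero l b : hcoef (zeroh (Q b) (Q l)) = 0.
Proof.
case c: ((l <= b)%O && nzb (Q l)); last by rewrite hcoef0 ?c.
case/andP: c => lb nz; rewrite -(hscale0 (rho l b)); exact: hcoef_scale.
Qed.

Lemma hcoef_id l : nzb (Q l) -> hcoef (idh (Q l)) = 1.
Proof. by move=> nz; rewrite -(sd_id hs) -{1}(hscale1 (rho l l)) hcoef_scale. Qed.

Lemma hcoef_restr l b a (h : rhom (Q b) (Q l)) : (b <= a)%O -> natural h ->
  hcoef (hcomp (rho b a) h) = hcoef h.
Proof.
move=> ba nh; case nz: (nzb (Q l)); last by rewrite !hcoef0 ?nz ?andbF.
case lb: (l <= b)%O.
  rewrite {1}(hcoefP nh) hcompZr -sd_comp // hcoef_scale //; exact: le_trans ba.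
have [_ th2] := sd_thin hs nh; rewrite th2 ?lb // hcomp0r hcoef_zero.
by rewrite hcoef0 ?lb.
Qed.

End Side.

Set Implicit Arguments.
Unset Strict Implicit.
Unset Printing Implicit Defensive.
Import Order.TTheory GRing.Theory.
Local Open Scope ring_scope.

Section Cover.
Variable K : fieldType.
Variables (dX : Order.disp_t) (X : finPOrderType dX).
Variables (dJ : Order.disp_t) (J : finPOrderType dJ).
Variables (Q : J -> rep K X) (rho : forall l b : J, rhom (Q b) (Q l)).

Record bip_ax (C : rep K X) (m : J -> nat) (iota : forall l, 'I_(m l) -> rhom (Q l) C)
  (pi : forall l, 'I_(m l) -> rhom C (Q l)) : Prop := BipAx {
  bp_nat : forall l i, natural (iota l i) /\ natural (pi l i);
  bp_diag : forall l i j, hcomp (iota l i) (pi l j) = if i == j then idh _ else zeroh _ _;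
  bp_off : forall l l' i j, l != l' -> hcomp (iota l i) (pi l' j) = zeroh _ _;
  bp_sum : forall x, \sum_l \sum_(i < m l) pi l i x *m iota l i x = 1%:M }.

Record cover_ax (C T : rep K X) (out : rhom C T) (H : forall b, rhom (Q b) T -> Prop)
  : Prop := CoverAx {
  cv_nat : natural out;
  cv_Hnat : forall b g, H b g -> natural g;
  cv_H0 : forall b, H b (zeroh _ _);
  cv_Hlin : forall b k g h, H b g -> H b h -> H b (hadd (hscale k g) h);
  cv_Hres : forall b a g, (b <= a)%O -> H b g -> H a (hcomp (rho b a) g);
  cv_in : forall b (h : rhom (Q b) C), natural h -> H b (hcomp h out);
  cv_lift : forall b g, H b g -> exists h, natural h /\ hcomp h out = g;
  cv_min : forall e : rhom C C, natural e -> hcomp e out = out -> is_iso e }.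

Hypothesis hs : side_ax rho.
Unset Implicit Arguments.
Variables (C : rep K X) (m : J -> nat) (iota : forall l, 'I_(m l) -> rhom (Q l) C)
  (pi : forall l, 'I_(m l) -> rhom C (Q l)).
Set Implicit Arguments.
Hypothesis hb : bip_ax iota pi.

Lemma decomp b (g : rhom (Q b) C) : natural g ->
  g = hsum xpredT (fun l => hsum xpredT (fun i : 'I_(m l) =>
        hscale (hcoef rho (hcomp g (pi l i))) (hcomp (rho l b) (iota l i)))).
Proof.
move=> ng.
have e1 : g = hcomp g (hsum xpredT (fun l => hsum xpredT (fun i : 'I_(m l) =>
                 hcomp (pi l i) (iota l i)))).
  by apply: heqE => x; rewrite /Defs.comp /hsum bp_sum // mulmx1.
rewrite {1}e1 hcomp_sumr; apply: eq_hsum => l _; rewrite hcomp_sumr.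
apply: eq_hsum => i _; rewrite -hcompA {1}(hcoefP hs (natural_comp ng (proj2 (bp_nat hb i)))).
by rewrite hcompZl.
Qed.

Unset Implicit Arguments.
Variables (T : rep K X) (out : rhom C T) (H : forall b, rhom (Q b) T -> Prop).
Set Implicit Arguments.
Hypothesis hc : cover_ax out H.

Definition Wp a (g : rhom (Q a) T) : Prop :=
  exists w : forall b, rhom (Q b) T, (forall b, (b < a)%O -> H b (w b)) /\
    g = hsum (fun b => (b < a)%O) (fun b => hcomp (rho b a) (w b)).
Arguments Wp : clear implicits.

Lemma H_sum b (I : finType) (P : pred I) (f : I -> rhom (Q b) T) :
  (forall i, P i -> H b (f i)) -> H b (hsum P f).
Proof.
move=> hf; rewrite hsum_big; elim/big_rec: _ => [|i w Pi Hw]; first by apply: (cv_H0 hc b).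
rewrite -(hscale1 (f i)); exact: (cv_Hlin hc 1 (hf i Pi) Hw).
Qed.

Lemma T1 a g : H a g -> exists c : 'I_(m a) -> K,
  Wp a (hadd g (hscale (-1) (hsum xpredT (fun i => hscale (c i) (hcomp (iota a i) out))))).
Proof.
move=> Hg; have [h [nh eh]] := cv_lift hc Hg.
exists (fun i => hcoef rho (hcomp h (pi a i))).
exists (fun b => hsum xpredT (fun i : 'I_(m b) =>
   hscale (hcoef rho (hcomp h (pi b i))) (hcomp (iota b i) out))); split.
  move=> b _; apply: H_sum => i _; rewrite -[X in H b X]hadd0r.
  apply: (cv_Hlin hc); last exact: (cv_H0 hc).
  by apply: (cv_in hc); case: (bp_nat hb i).
apply: heqE => x; rewrite -eh {1}(decomp nh) /hadd /hscale /hsum /Defs.comp.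
have EF : forall l, (\sum_(i < m l) hcoef rho (hcomp h (pi l i)) *: (rho l a x *m iota l i x)) *m out x
   = rho l a x *m \sum_(i < m l) hcoef rho (hcomp h (pi l i)) *: (iota l i x *m out x).
  move=> l; rewrite mulmx_suml mulmx_sumr; apply: eq_bigr => i _.
  by rewrite -scalemxAl -mulmxA scalemxAr.
rewrite mulmx_suml (eq_bigr _ (fun l _ => EF l)) (bigD1 a) //= (sd_id hs) /idh mul1mx.
rewrite addrAC scaleN1r subrr add0r.
rewrite [LHS]big_mkcond [RHS]big_mkcond; apply: eq_bigr => l _.
rewrite lt_neqAle; case: (l != a) => //=; case la: (l <= a)%O => //=.
by rewrite big1 ?mulmx0 // => i _; rewrite hcoef0 ?la // scale0r.
Qed.

Lemma T2 a : nzb (Q a) -> forall c : 'I_(m a) -> K,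
  Wp a (hsum xpredT (fun i => hscale (c i) (hcomp (iota a i) out))) -> forall i, c i = 0.
Proof.
move=> nz c [w [Hw ew]] i0; apply/eqP; apply: contraT => ci0; exfalso.
have [hl Hhl] : exists hl : forall b, rhom (Q b) C, forall b,
    natural (hl b) /\ ((b < a)%O -> hcomp (hl b) out = w b).
  apply: (@dchoice J (fun b => rhom (Q b) C)
    (fun b h => natural h /\ ((b < a)%O -> hcomp h out = w b))) => b; case ba: (b < a)%O.
    by have [h [nh eh]] := cv_lift hc (Hw b ba); exists h.
  by exists (zeroh _ _); split => //; exact: natural_zero.
have nio : forall l (i : 'I_(m l)), natural (iota l i) by move=> l i; case: (bp_nat hb i).
have npi : forall l (i : 'I_(m l)), natural (pi l i) by move=> l i; case: (bp_nat hb i).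
set xi := hsum xpredT (fun i => hscale (c i) (iota a i)).
set v := hsum (fun b => (b < a)%O) (fun b => hcomp (rho b a) (hl b)).
set u := hadd xi (hscale (-1) v).
set e := hadd (idh C) (hscale (- (c i0)^-1) (hcomp (pi a i0) u)).
have nxi : natural xi by apply: natural_sum => i _; apply: natural_scale.
have nv : natural v.
  apply: natural_sum => b ba; apply: natural_comp; last by case: (Hhl b).
  by apply: (sd_nat hs); apply: ltW.
have nu : natural u by apply: natural_add => //; apply: natural_scale.
have ne : natural e.
  apply: natural_add; first exact: natural_id.
  by apply: natural_scale; apply: natural_comp.
have hxo : hcomp xi out = hcomp v out.
  rewrite /xi /v !hcomp_suml.
  have -> : hsum xpredT (fun i => hcomp (hscale (c i) (iota a i)) out)
     = hsum xpredT (fun i => hscale (c i) (hcomp (iota a i) out)).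
    by apply: eq_hsum => i _; rewrite hcompZl.
  rewrite ew; apply: eq_hsum => b ba; rewrite hcompA.
  by case: (Hhl b) => _ ->.
have hu : hcomp u out = zeroh _ _.
  rewrite /u hcompDl hcompZl hxo; apply: heqE => x.
  by rewrite /hadd /hscale /zeroh scaleN1r subrr.
have he : hcomp e out = out.
  rewrite /e hcompDl hcomp_idl hcompZl hcompA hu hcomp0r hscaler0 hadd0r //.
have [f [nf [ef1 ef2]]] := cv_min hc ne he.
have hxipi : hcomp xi (pi a i0) = hscale (c i0) (idh (Q a)).
  rewrite /xi hcomp_suml; apply: heqE => x; rewrite /hsum /hscale.
  rewrite (bigD1 i0) //= big1 ?addr0.
    by rewrite hcompZl (bp_diag hb) eqxx.
  by move=> i ni; rewrite hcompZl (bp_diag hb) (negbTE ni) /hscale /zeroh scaler0.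
have hxie : hcomp xi e = v.
  rewrite /e hcompDr hcomp_idr hcompZr -hcompA hxipi hcompZl hcomp_idl /u.
  apply: heqE => x; rewrite /hadd /hscale scalerA mulNr mulVf // scaleN1r.
  by rewrite scaleN1r opprD opprK addrA subrr add0r.
have hxi : xi = hcomp v f.
  rewrite -hxie hcompA.
  have -> : hcomp e f = idh C by apply: heqE.
  by rewrite hcomp_idr.
have : hcomp xi (pi a i0) = zeroh _ _.
  rewrite hxi /v hcomp_suml hcomp_suml; apply: heqE => x; rewrite /hsum /zeroh.
  apply: big1 => b ba; rewrite !hcompA.
  have nb : natural (hcomp (hl b) (hcomp f (pi a i0))).
    by apply: natural_comp; [case: (Hhl b) | apply: natural_comp].
  have [_ th2] := sd_thin hs nb.
  by rewrite th2 ?hcomp0r // lt_geF.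
rewrite hxipi => /(scale_idh_eq0 nz) /eqP.
by rewrite (negbTE ci0).
Qed.

Lemma Wp_H a g : Wp a g -> H a g.
Proof.
case=> w [Hw ->]; apply: H_sum => b ba; apply: (cv_Hres hc (ltW ba)); exact: Hw.
Qed.

Lemma Wp_zero a : Wp a (zeroh _ _).
Proof.
exists (fun b => zeroh _ _); split; first by move=> b _; exact: (cv_H0 hc).
apply: heqE => x; rewrite /hsum /zeroh big1 // => b _.
by rewrite /Defs.comp mulmx0.
Qed.

Lemma Wp_lin a k u v : Wp a u -> Wp a v -> Wp a (hadd (hscale k u) v).
Proof.
case=> w [Hw ->] [w' [Hw' ->]].
exists (fun b => hadd (hscale k (w b)) (w' b)); split.
  by move=> b ba; apply: (cv_Hlin hc); [exact: Hw | exact: Hw'].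
apply: heqE => x; rewrite /hsum /hadd /hscale /Defs.comp scaler_sumr -big_split.
by apply: eq_bigr => b _; rewrite mulmxDr scalemxAr.
Qed.

End Cover.

Set Implicit Arguments.
Unset Strict Implicit.
Unset Printing Implicit Defensive.
Import Order.TTheory GRing.Theory.
Local Open Scope ring_scope.

Section Morph.
Variable K : fieldType.
Variables (dJ : Order.disp_t) (J : finPOrderType dJ).
Unset Implicit Arguments.
Variables (dX1 : Order.disp_t) (X1 : finPOrderType dX1).
Variables (Q1 : J -> rep K X1) (rho1 : forall l b : J, rhom (Q1 b) (Q1 l)).
Variables (dX2 : Order.disp_t) (X2 : finPOrderType dX2).
Variables (Q2 : J -> rep K X2) (rho2 : forall l b : J, rhom (Q2 b) (Q2 l)).
Variables (U1 : rep K X1) (U2 : rep K X2).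
Variables (H1 : forall b, rhom (Q1 b) U1 -> Prop) (H2 : forall b, rhom (Q2 b) U2 -> Prop).
Variable th : forall b, rhom (Q1 b) U1 -> rhom (Q2 b) U2.
Set Implicit Arguments.

Record morph_ax : Prop := MorphAx {
  th_H : forall b g, H1 b g -> H2 b (th b g);
  th_lin : forall b k g h, H1 b g -> H1 b h ->
     th b (hadd (hscale k g) h) = hadd (hscale k (th b g)) (th b h);
  th_nat : forall b a g, (b <= a)%O -> H1 b g ->
     th a (hcomp (rho1 b a) g) = hcomp (rho2 b a) (th b g) }.

Definition iso_ax : Prop :=
  [/\ morph_ax,
      forall b g, H1 b g -> th b g = zeroh _ _ -> g = zeroh _ _ &
      forall b g', H2 b g' -> exists g, H1 b g /\ th b g = g'].

Hypothesis H1_0 : forall b, H1 b (zeroh _ _).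
Hypothesis H1_lin : forall b k g h, H1 b g -> H1 b h -> H1 b (hadd (hscale k g) h).
Hypothesis hm : morph_ax.

Lemma th_zero b : th b (zeroh _ _) = zeroh _ _.
Proof.
have := th_lin hm 1 (H1_0 b) (H1_0 b); rewrite !hscale1 hadd0r => e.
apply: heqE => x; have := congr1 (fun f => f x) e; rewrite /hadd /zeroh.
by rewrite -{1}(addr0 (th b _ x)) => /addrI <-.
Qed.

Lemma th_scale b k g : H1 b g -> th b (hscale k g) = hscale k (th b g).
Proof.
move=> Hg; have := th_lin hm k Hg (H1_0 b); rewrite !hadd0r th_zero hadd0r //.
Qed.

Lemma th_add b g h : H1 b g -> H1 b h -> th b (hadd g h) = hadd (th b g) (th b h).
Proof. by move=> Hg Hh; have := th_lin hm 1 Hg Hh; rewrite !hscale1. Qed.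

Lemma H1_sum b (I : finType) (P : pred I) (f : I -> rhom (Q1 b) U1) :
  (forall i, P i -> H1 b (f i)) -> H1 b (hsum P f).
Proof.
move=> hf; rewrite hsum_big; elim/big_rec: _ => [|i w Pi Hw]; first exact: H1_0.
by rewrite -(hscale1 (f i)); apply: H1_lin => //; apply: hf.
Qed.

Lemma th_sum b (I : finType) (P : pred I) (f : I -> rhom (Q1 b) U1) :
  (forall i, P i -> H1 b (f i)) -> th b (hsum P f) = hsum P (fun i => th b (f i)).
Proof.
move=> hf; rewrite !hsum_big.
suff [] : H1 b (\big[@hadd _ _ _ (Q1 b) U1/zeroh _ _]_(i | P i) f i) /\
  th b (\big[@hadd _ _ _ (Q1 b) U1/zeroh _ _]_(i | P i) f i) =
  \big[@hadd _ _ _ (Q2 b) U2/zeroh _ _]_(i | P i) th b (f i) by [].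
apply: (big_rec2 (fun y1 y2 => H1 b y1 /\ th b y1 = y2)).
  by split; [exact: H1_0 | exact: th_zero].
move=> i y1 y2 Pi [Hy e]; split.
  by rewrite -(hscale1 (f i)); apply: H1_lin => //; apply: hf.
by rewrite th_add ?e //; apply: hf.
Qed.

End Morph.

Section Inverse.
Variable K : fieldType.
Variables (dJ : Order.disp_t) (J : finPOrderType dJ).
Unset Implicit Arguments.
Variables (dX1 : Order.disp_t) (X1 : finPOrderType dX1).
Variables (Q1 : J -> rep K X1) (rho1 : forall l b : J, rhom (Q1 b) (Q1 l)).
Variables (dX2 : Order.disp_t) (X2 : finPOrderType dX2).
Variables (Q2 : J -> rep K X2) (rho2 : forall l b : J, rhom (Q2 b) (Q2 l)).
Variables (U1 : rep K X1) (U2 : rep K X2).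
Variables (H1 : forall b, rhom (Q1 b) U1 -> Prop) (H2 : forall b, rhom (Q2 b) U2 -> Prop).
Variable th : forall b, rhom (Q1 b) U1 -> rhom (Q2 b) U2.
Set Implicit Arguments.

Hypothesis H1_0 : forall b, H1 b (zeroh _ _).
Hypothesis H1_lin : forall b k g h, H1 b g -> H1 b h -> H1 b (hadd (hscale k g) h).
Hypothesis H1_res : forall b a g, (b <= a)%O -> H1 b g -> H1 a (hcomp (rho1 b a) g).
Hypothesis H2_0 : forall b, H2 b (zeroh _ _).
Hypothesis H2_lin : forall b k g h, H2 b g -> H2 b h -> H2 b (hadd (hscale k g) h).
Hypothesis H2_res : forall b a g, (b <= a)%O -> H2 b g -> H2 a (hcomp (rho2 b a) g).

Lemma iso_inv : iso_ax rho1 rho2 H1 H2 th ->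
  exists th' : forall b, rhom (Q2 b) U2 -> rhom (Q1 b) U1,
  [/\ iso_ax rho2 rho1 H2 H1 th',
      (forall b g, H1 b g -> th' b (th b g) = g) &
      (forall b g', H2 b g' -> th b (th' b g') = g')].
Proof.
case=> hm hinj hsurj.
have inj : forall b g h, H1 b g -> H1 b h -> th b g = th b h -> g = h.
  move=> b g h Hg Hh e.
  have Hd : H1 b (hadd (hscale (-1) h) g) by apply: H1_lin.
  have := th_lin hm (-1) Hh Hg; rewrite -e => e2.
  have : th b (hadd (hscale (-1) h) g) = zeroh _ _.
    by rewrite e2; apply: heqE => x; rewrite /hadd /hscale /zeroh scaleN1r addNr.
  move/(hinj _ _ Hd) => e3; apply: heqE => x.
  have := congr1 (fun f => f x) e3; rewrite /hadd /hscale /zeroh scaleN1r.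
  by move/eqP; rewrite addrC subr_eq0 => /eqP.
pose th' b g' := epsilon (inhabits (zeroh (Q1 b) U1)) (fun g => H1 b g /\ th b g = g').
have spec : forall b g', H2 b g' -> H1 b (th' b g') /\ th b (th' b g') = g'.
  move=> b g' Hg'; exact: (epsilon_spec _ _ (hsurj b g' Hg')).
have K1 : forall b g, H1 b g -> th' b (th b g) = g.
  move=> b g Hg; have [Ha Hb] := spec b _ (th_H hm Hg); exact: inj.
exists th'; split => //; last by move=> b g' /spec [].
split; last first.
- by move=> b g Hg; exists (th b g); split; [exact: (th_H hm Hg) | exact: K1].
- move=> b g' Hg' e; have [_ <-] := spec b g' Hg'; rewrite e; exact: (th_zero H1_0 hm).
split.
- by move=> b g' /spec [].
- move=> b k g h Hg Hh; have [Ag Bg] := spec b g Hg; have [Ah Bh] := spec b h Hh.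
  apply: inj; [| by apply: H1_lin |].
    by case: (spec b _ (H2_lin k Hg Hh)).
  by case: (spec b _ (H2_lin k Hg Hh)) => _ ->; rewrite (th_lin hm) // Bg Bh.
- move=> b a g' ba Hg'; have [Ag Bg] := spec b g' Hg'.
  apply: inj; [by case: (spec a _ (H2_res ba Hg')) | by apply: H1_res |].
  by case: (spec a _ (H2_res ba Hg')) => _ ->; rewrite (th_nat hm) // Bg.
Qed.

End Inverse.

Set Implicit Arguments.
Unset Strict Implicit.
Unset Printing Implicit Defensive.
Import Order.TTheory GRing.Theory.
Local Open Scope ring_scope.

Section Good.
Variable K : fieldType.
Variables (dJ : Order.disp_t) (J : finPOrderType dJ).
Unset Implicit Arguments.
Variables (dX1 : Order.disp_t) (X1 : finPOrderType dX1).
Variables (Q1 : J -> rep K X1) (rho1 : forall l b : J, rhom (Q1 b) (Q1 l)).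
Variables (C1 : rep K X1) (m1 : J -> nat) (iota1 : forall l, 'I_(m1 l) -> rhom (Q1 l) C1)
  (pi1 : forall l, 'I_(m1 l) -> rhom C1 (Q1 l)).
Variables (U1 : rep K X1) (out1 : rhom C1 U1).
Variables (dX2 : Order.disp_t) (X2 : finPOrderType dX2).
Variables (Q2 : J -> rep K X2) (rho2 : forall l b : J, rhom (Q2 b) (Q2 l)).
Variables (C2 : rep K X2) (U2 : rep K X2) (out2 : rhom C2 U2).
Variable th : forall b, rhom (Q1 b) U1 -> rhom (Q2 b) U2.
Variable A : forall b, rhom (Q1 b) C1 -> rhom (Q2 b) C2.
Set Implicit Arguments.

Definition good : Prop :=
 [/\ forall b g, natural g -> natural (A b g),
     forall b g, natural g -> hcomp (A b g) out2 = th b (hcomp g out1),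
     forall b k g h, natural g -> natural h ->
        A b (hadd (hscale k g) h) = hadd (hscale k (A b g)) (A b h),
     forall b a g, (b <= a)%O -> natural g ->
        A a (hcomp (rho1 b a) g) = hcomp (rho2 b a) (A b g) &
     forall b g, natural g -> A b g = hsum xpredT (fun l => hsum xpredT (fun i : 'I_(m1 l) =>
        hscale (hcoef rho1 (hcomp g (pi1 l i))) (hcomp (rho2 l b) (A l (iota1 l i)))))].

End Good.

Section Alpha.
Variable K : fieldType.
Variables (dJ : Order.disp_t) (J : finPOrderType dJ).
Unset Implicit Arguments.
Variables (dX1 : Order.disp_t) (X1 : finPOrderType dX1).
Variables (Q1 : J -> rep K X1) (rho1 : forall l b : J, rhom (Q1 b) (Q1 l)).
Variables (C1 : rep K X1) (m1 : J -> nat) (iota1 : forall l, 'I_(m1 l) -> rhom (Q1 l) C1)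
  (pi1 : forall l, 'I_(m1 l) -> rhom C1 (Q1 l)).
Variables (U1 : rep K X1) (out1 : rhom C1 U1) (H1 : forall b, rhom (Q1 b) U1 -> Prop).
Variables (dX2 : Order.disp_t) (X2 : finPOrderType dX2).
Variables (Q2 : J -> rep K X2) (rho2 : forall l b : J, rhom (Q2 b) (Q2 l)).
Variables (C2 : rep K X2) (U2 : rep K X2) (out2 : rhom C2 U2)
  (H2 : forall b, rhom (Q2 b) U2 -> Prop).
Variable th : forall b, rhom (Q1 b) U1 -> rhom (Q2 b) U2.
Set Implicit Arguments.
Hypotheses (hs1 : side_ax rho1) (hf1 : side_flat rho1) (hb1 : bip_ax iota1 pi1)
  (hc1 : cover_ax rho1 out1 H1).
Hypotheses (hs2 : side_ax rho2) (hc2 : cover_ax rho2 out2 H2).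
Hypothesis hm : morph_ax rho1 rho2 H1 H2 th.

Definition gam l (i : 'I_(m1 l)) : rhom (Q2 l) C2 :=
  epsilon (inhabits (zeroh (Q2 l) C2))
    (fun h => natural h /\ hcomp h out2 = th l (hcomp (iota1 l i) out1)).

Lemma gam_spec l i : natural (gam i) /\ hcomp (gam i) out2 = th l (hcomp (iota1 l i) out1).
Proof.
have ni : natural (iota1 l i) by case: (bp_nat hb1 i).
have [h hh] := cv_lift hc2 (th_H hm (cv_in hc1 ni)).
exact: (epsilon_spec (inhabits (zeroh (Q2 l) C2))
  (fun h => natural h /\ hcomp h out2 = th l (hcomp (iota1 l i) out1)) (ex_intro _ h hh)).
Qed.

Definition alpha b (g : rhom (Q1 b) C1) : rhom (Q2 b) C2 :=
  hsum xpredT (fun l => hsum xpredT (fun i : 'I_(m1 l) =>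
    hscale (hcoef rho1 (hcomp g (pi1 l i))) (hcomp (rho2 l b) (gam i)))).
Arguments alpha : clear implicits.

Let H1_0 := cv_H0 hc1.
Let H1_lin := cv_Hlin hc1.

Lemma alpha_nat b g : natural (alpha b g).
Proof.
apply: natural_sum => l _; apply: natural_sum => i _.
case lb: (l <= b)%O.
  apply: natural_scale; apply: natural_comp; first exact: (sd_nat hs2 lb).
  by case: (gam_spec i).
rewrite hcoef0 ?lb // hscale0; exact: natural_zero.
Qed.

Lemma alpha_out b g : natural g -> hcomp (alpha b g) out2 = th b (hcomp g out1).
Proof.
move=> ng; rewrite {2}(decomp hs1 hb1 ng) /alpha !hcomp_suml.
have mem : forall l (i : 'I_(m1 l)),
    H1 b (hcomp (hscale (hcoef rho1 (hcomp g (pi1 l i))) (hcomp (rho1 l b) (iota1 l i))) out1).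
  move=> l i; case lb: (l <= b)%O.
    rewrite hcompZl -[X in H1 b X]hadd0r; apply: H1_lin; last exact: H1_0.
    rewrite hcompA; apply: (cv_Hres hc1 lb); apply: (cv_in hc1).
    by case: (bp_nat hb1 i).
  by rewrite hcoef0 ?lb // hscale0 hcomp0l; exact: H1_0.
rewrite (th_sum H1_0 H1_lin hm); last first.
  by move=> l _; rewrite hcomp_suml; apply: H1_sum => // i _; exact: mem.
apply: eq_hsum => l _; rewrite !hcomp_suml (th_sum H1_0 H1_lin hm); last by move=> i _; exact: mem.
apply: eq_hsum => i _.
case lb: (l <= b)%O; last first.
  by rewrite hcoef0 ?lb // !hscale0 !hcomp0l (th_zero H1_0 hm).
have Hi : H1 l (hcomp (iota1 l i) out1) by apply: (cv_in hc1); case: (bp_nat hb1 i).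
rewrite !hcompZl (th_scale H1_0 hm); last by rewrite hcompA; exact: (cv_Hres hc1 lb).
by rewrite !hcompA (th_nat hm lb Hi); case: (gam_spec i) => _ ->.
Qed.

Lemma alpha_lin b k g h : natural g -> natural h ->
  alpha b (hadd (hscale k g) h) = hadd (hscale k (alpha b g)) (alpha b h).
Proof.
move=> ng nh; rewrite /alpha.
have e : forall l (i : 'I_(m1 l)), hcoef rho1 (hcomp (hadd (hscale k g) h) (pi1 l i))
   = k * hcoef rho1 (hcomp g (pi1 l i)) + hcoef rho1 (hcomp h (pi1 l i)).
  move=> l i; have npi : natural (pi1 l i) by case: (bp_nat hb1 i).
  by rewrite hcompDl hcompZl (hcoef_lin hs1 hf1) //; apply: natural_comp.
apply: heqE => x; rewrite /hsum /hadd /hscale scaler_sumr -big_split; apply: eq_bigr => l _.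
rewrite scaler_sumr -big_split; apply: eq_bigr => i _.
by rewrite e scalerDl scalerA.
Qed.

Lemma alpha_restr b a g : (b <= a)%O -> natural g ->
  alpha a (hcomp (rho1 b a) g) = hcomp (rho2 b a) (alpha b g).
Proof.
move=> ba ng; rewrite /alpha hcomp_sumr; apply: eq_hsum => l _.
rewrite hcomp_sumr; apply: eq_hsum => i _.
have npi : natural (pi1 l i) by case: (bp_nat hb1 i).
rewrite hcompA (hcoef_restr hs1 hf1 ba); last exact: natural_comp.
case lb: (l <= b)%O; last by rewrite hcoef0 ?lb // !hscale0 hcomp0r.
by rewrite hcompZr (sd_comp hs2 lb ba) hcompA.
Qed.

Lemma alpha_iota l (i : 'I_(m1 l)) : nzb (Q1 l) -> alpha l (iota1 l i) = gam i.
Proof.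
move=> nz; apply: heqE => x; rewrite /alpha /hsum /hscale.
rewrite (bigD1 l) //= [X in _ + X]big1 ?addr0; last first.
  move=> l' nl' /=; apply: big1 => i' _.
  by rewrite (bp_off hb1 i i' (_ : l != l')) ?(hcoef_zero hs1 hf1) ?scale0r // eq_sym.
rewrite (bigD1 i) //= [X in _ + X]big1 ?addr0; last first.
  by move=> i' ni'; rewrite (bp_diag hb1) eq_sym (negbTE ni') /= (hcoef_zero hs1 hf1) scale0r.
by rewrite (bp_diag hb1) eqxx (hcoef_id hs1 hf1 nz) scale1r (sd_id hs2) hcomp_idl.
Qed.

Lemma good_alpha : good rho1 iota1 pi1 out1 rho2 out2 th alpha.
Proof.
split.
- by move=> b g _; exact: alpha_nat.
- exact: alpha_out.
- exact: alpha_lin.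
- exact: alpha_restr.
move=> b g ng; rewrite {1}/alpha; apply: eq_hsum => l _; apply: eq_hsum => i _.
case nz: (nzb (Q1 l)); first by rewrite alpha_iota.
by rewrite hcoef0 ?nz ?andbF // !hscale0.
Qed.

End Alpha.

Set Implicit Arguments.
Unset Strict Implicit.
Unset Printing Implicit Defensive.
Import Order.TTheory GRing.Theory.
Local Open Scope ring_scope.

Section Compose.
Variable K : fieldType.
Variables (dJ : Order.disp_t) (J : finPOrderType dJ).
Unset Implicit Arguments.
Variables (dX1 : Order.disp_t) (X1 : finPOrderType dX1).
Variables (Q1 : J -> rep K X1) (rho1 : forall l b : J, rhom (Q1 b) (Q1 l)).
Variables (C1 : rep K X1) (m1 : J -> nat) (iota1 : forall l, 'I_(m1 l) -> rhom (Q1 l) C1)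
  (pi1 : forall l, 'I_(m1 l) -> rhom C1 (Q1 l)).
Variables (U1 : rep K X1) (out1 : rhom C1 U1) (H1 : forall b, rhom (Q1 b) U1 -> Prop).
Variables (dX2 : Order.disp_t) (X2 : finPOrderType dX2).
Variables (Q2 : J -> rep K X2) (rho2 : forall l b : J, rhom (Q2 b) (Q2 l)).
Variables (C2 : rep K X2) (m2 : J -> nat) (iota2 : forall l, 'I_(m2 l) -> rhom (Q2 l) C2)
  (pi2 : forall l, 'I_(m2 l) -> rhom C2 (Q2 l)).
Variables (U2 : rep K X2) (out2 : rhom C2 U2) (H2 : forall b, rhom (Q2 b) U2 -> Prop).
Variable th : forall b, rhom (Q1 b) U1 -> rhom (Q2 b) U2.
Variable th' : forall b, rhom (Q2 b) U2 -> rhom (Q1 b) U1.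
Variable A : forall b, rhom (Q1 b) C1 -> rhom (Q2 b) C2.
Variable B : forall b, rhom (Q2 b) C2 -> rhom (Q1 b) C1.
Set Implicit Arguments.
Hypotheses (hs2 : side_ax rho2) (hs1 : side_ax rho1) (hb1 : bip_ax iota1 pi1) (hc1 : cover_ax rho1 out1 H1).
Hypotheses (hA : good rho1 iota1 pi1 out1 rho2 out2 th A)
           (hB : good rho2 iota2 pi2 out2 rho1 out1 th' B).
Hypothesis thK : forall b g, H1 b g -> th' b (th b g) = g.

Lemma compose : exists e : rhom C1 C1, [/\ natural e, hcomp e out1 = out1 &
  forall b g, natural g -> B b (A b g) = hcomp g e].
Proof.
case: hA => An Aout Alin Ares Adec; case: hB => Bn Bout Blin Bres Bdec.
have nio : forall l (i : 'I_(m1 l)), natural (iota1 l i) by move=> l i; case: (bp_nat hb1 i).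
have npi : forall l (i : 'I_(m1 l)), natural (pi1 l i) by move=> l i; case: (bp_nat hb1 i).
exists (hsum xpredT (fun l => hsum xpredT (fun i : 'I_(m1 l) =>
          hcomp (pi1 l i) (B l (A l (iota1 l i)))))); split.
- apply: natural_sum => l _; apply: natural_sum => i _; apply: natural_comp => //.
  by apply: Bn; apply: An.
- have e1 : out1 = hcomp (hsum xpredT (fun l => hsum xpredT (fun i : 'I_(m1 l) =>
                 hcomp (pi1 l i) (iota1 l i)))) out1.
    by apply: heqE => x; rewrite /Defs.comp /hsum bp_sum // mul1mx.
  rewrite {2}e1 !hcomp_suml; apply: eq_hsum => l _; rewrite !hcomp_suml.
  apply: eq_hsum => i _; rewrite !hcompA Bout; last by apply: An.
  by rewrite Aout // thK //; apply: (cv_in hc1).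
move=> b g ng.
rewrite (Adec b g ng) (lin_sum (Blin b)); last first.
  move=> l _; apply: natural_sum => i _; case lb: (l <= b)%O; last first.
    by rewrite hcoef0 ?lb // hscale0; exact: natural_zero.
  by apply: natural_scale; apply: natural_comp; [exact: (sd_nat hs2 lb) | apply: An].
rewrite hcomp_sumr; apply: eq_hsum => l _.
rewrite (lin_sum (Blin b)); last first.
  move=> i _; case lb: (l <= b)%O; last first.
    by rewrite hcoef0 ?lb // hscale0; exact: natural_zero.
  by apply: natural_scale; apply: natural_comp; [exact: (sd_nat hs2 lb) | apply: An].
rewrite hcomp_sumr; apply: eq_hsum => i _.
rewrite -hcompA {2}(hcoefP hs1 (natural_comp ng (npi l i))) hcompZl.
case lb: (l <= b)%O; last first.
  by rewrite hcoef0 ?lb // !hscale0 (lin_zero (Blin b)).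
rewrite (lin_scale (Blin b)); last first.
  by apply: natural_comp; [exact: (sd_nat hs2 lb) | apply: An].
by rewrite Bres //; apply: An.
Qed.

End Compose.

Set Implicit Arguments.
Unset Strict Implicit.
Unset Printing Implicit Defensive.
Import Order.TTheory GRing.Theory.
Local Open Scope ring_scope.

Section Step.
Variable K : fieldType.
Variables (dJ : Order.disp_t) (J : finPOrderType dJ).
Unset Implicit Arguments.
Variables (dX1 : Order.disp_t) (X1 : finPOrderType dX1).
Variables (Q1 : J -> rep K X1) (rho1 : forall l b : J, rhom (Q1 b) (Q1 l)).
Variables (C1 : rep K X1) (m1 : J -> nat) (iota1 : forall l, 'I_(m1 l) -> rhom (Q1 l) C1)
  (pi1 : forall l, 'I_(m1 l) -> rhom C1 (Q1 l)).
Variables (U1 : rep K X1) (out1 : rhom C1 U1) (H1 : forall b, rhom (Q1 b) U1 -> Prop).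
Variables (dX2 : Order.disp_t) (X2 : finPOrderType dX2).
Variables (Q2 : J -> rep K X2) (rho2 : forall l b : J, rhom (Q2 b) (Q2 l)).
Variables (C2 : rep K X2) (m2 : J -> nat) (iota2 : forall l, 'I_(m2 l) -> rhom (Q2 l) C2)
  (pi2 : forall l, 'I_(m2 l) -> rhom C2 (Q2 l)).
Variables (U2 : rep K X2) (out2 : rhom C2 U2) (H2 : forall b, rhom (Q2 b) U2 -> Prop).
Variable th : forall b, rhom (Q1 b) U1 -> rhom (Q2 b) U2.
Set Implicit Arguments.
Hypotheses (hs1 : side_ax rho1) (hf1 : side_flat rho1) (hb1 : bip_ax iota1 pi1)
  (hc1 : cover_ax rho1 out1 H1).
Hypotheses (hs2 : side_ax rho2) (hf2 : side_flat rho2) (hb2 : bip_ax iota2 pi2)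
  (hc2 : cover_ax rho2 out2 H2).
Hypothesis hi : iso_ax rho1 rho2 H1 H2 th.

Lemma step : exists A : forall b, rhom (Q1 b) C1 -> rhom (Q2 b) C2,
  iso_ax rho1 rho2 (fun b g => natural g /\ hcomp g out1 = zeroh _ _)
                   (fun b g => natural g /\ hcomp g out2 = zeroh _ _) A.
Proof.
have [th' [hi' K1 K2]] := iso_inv (cv_H0 hc1) (cv_Hlin hc1) (cv_Hres hc1)
   (cv_Hlin hc2) (cv_Hres hc2) hi.
case: (hi) => hm hinj hsurj; case: (hi') => hm' _ _.
have gA := good_alpha hs1 hf1 hb1 hc1 hs2 hc2 hm.
have gB := good_alpha hs2 hf2 hb2 hc2 hs1 hc1 hm'.
set A := alpha rho1 iota1 pi1 out1 rho2 out2 th in gA.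
set B := alpha rho2 iota2 pi2 out2 rho1 out1 th' in gB.
have [e [ne he eBA]] := compose hs2 hs1 hb1 hc1 gA gB K1.
have [e' [ne' he' eAB]] := compose hs1 hs2 hb2 hc2 gB gA K2.
have [f [nf [ef1 ef2]]] := cv_min hc1 ne he.
have [f' [nf' [ef1' ef2']]] := cv_min hc2 ne' he'.
case: (gA) => An Aout Alin Ares _; case: (gB) => Bn _ Blin _ _.
have H1z := cv_H0 hc1.
exists A; split; first split.
- move=> b g [ng eg]; split; first exact: An.
  by rewrite Aout // eg (th_zero H1z hm).
- by move=> b k g h [ng _] [nh _]; apply: Alin.
- by move=> b a g ba [ng _]; apply: Ares.
- move=> b g [ng _] e0.
  have -> : g = hcomp g (hcomp e f) by rewrite (heqE ef1) hcomp_idr.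
  by rewrite -hcompA -eBA // e0 (lin_zero (Blin b)) hcomp0l.
- move=> b g' [ng' eg']; exists (B b (hcomp g' f')).
  have ng : natural (B b (hcomp g' f')) by apply: Bn; apply: natural_comp.
  have eA : A b (B b (hcomp g' f')) = g'.
    by rewrite eAB ?hcompA ?(heqE ef2') ?hcomp_idr //; apply: natural_comp.
  split => //; split => //.
  apply: (hinj b); first by apply: (cv_in hc1).
  by rewrite -Aout // eA eg'.
Qed.

End Step.

Set Implicit Arguments.
Unset Strict Implicit.
Unset Printing Implicit Defensive.
Import Order.TTheory GRing.Theory.
Local Open Scope ring_scope.

Section Count.
Variables (K : fieldType) (n : nat) (W : 'rV[K]_n -> Prop).
Hypothesis W0 : W 0.
Hypothesis Wlin : forall k u v, W u -> W v -> W (k *: u + v).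

Lemma W_sum (I : finType) (P : pred I) (f : I -> 'rV[K]_n) :
  (forall i, P i -> W (f i)) -> W (\sum_(i | P i) f i).
Proof.
move=> hf; elim/big_rec: _ => // i v Pi Hv.
by rewrite -(scale1r (f i)); apply: Wlin => //; apply: hf.
Qed.

Lemma count_le m m' (x : 'I_m -> 'rV[K]_n) (y : 'I_m' -> 'rV[K]_n) :
  (forall i, exists c : 'I_m' -> K, W (x i - \sum_j c j *: y j)) ->
  (forall j, exists c : 'I_m -> K, W (y j - \sum_i c i *: x i)) ->
  (forall c : 'I_m -> K, W (\sum_i c i *: x i) -> forall i, c i = 0) ->
  (m <= m')%N.
Proof.
move=> sx sy ix.
have [C hC] := fin_all_exists sx; have [D hD] := fin_all_exists sy.
pose Cm : 'M[K]_(m, m') := \matrix_(i, j) C i j.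
pose Dm : 'M[K]_(m', m) := \matrix_(j, k) D j k.
suff e : Cm *m Dm = 1%:M.
  by rewrite -(mxrank1 K m) -e (leq_trans (mxrankM_maxl _ _)) // rank_leq_col.
apply/matrixP => i k.
have Wi : W (x i - \sum_k (\sum_j C i j * D j k) *: x k).
  have -> : x i - \sum_k (\sum_j C i j * D j k) *: x k =
     1 *: (x i - \sum_j C i j *: y j) + \sum_j C i j *: (y j - \sum_k D j k *: x k).
    have e2 : \sum_j C i j *: (y j - \sum_k D j k *: x k) =
        \sum_j C i j *: y j - \sum_k (\sum_j C i j * D j k) *: x k.
      under eq_bigr do rewrite scalerBr.
      rewrite sumrB; congr (_ - _).
      under eq_bigr do rewrite scaler_sumr.
      rewrite exchange_big /=; apply: eq_bigr => k' _.
      rewrite scaler_suml; apply: eq_bigr => j _; by rewrite scalerA.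
    by rewrite scale1r e2 addrA subrK.
  apply: Wlin; first exact: hC.
  apply: W_sum => j _; rewrite -[X in W X]addr0; apply: Wlin => //; exact: hD.
pose c (k' : 'I_m) := (i == k')%:R - \sum_j C i j * D j k'.
have hc : \sum_k' c k' *: x k' = x i - \sum_k (\sum_j C i j * D j k) *: x k.
  rewrite /c; under eq_bigr do rewrite scalerBl.
  rewrite sumrB; congr (_ - _).
  rewrite (bigD1 i) //= eqxx scale1r big1 ?addr0 // => k' nk'.
  by rewrite eq_sym (negbTE nk') scale0r.
have := ix c; rewrite hc => /(_ Wi k) /eqP; rewrite /c subr_eq0 => /eqP e. rewrite !mxE e; apply: eq_bigr => j _; rewrite !mxE //.
Qed.

End Count.

Set Implicit Arguments.
Unset Strict Implicit.
Unset Printing Implicit Defensive.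
Import Order.TTheory GRing.Theory.
Local Open Scope ring_scope.

Section Final.
Variable K : fieldType.
Variables (dJ : Order.disp_t) (J : finPOrderType dJ).
Unset Implicit Arguments.
Variables (dX1 : Order.disp_t) (X1 : finPOrderType dX1).
Variables (Q1 : J -> rep K X1) (rho1 : forall l b : J, rhom (Q1 b) (Q1 l)).
Variables (C1 : rep K X1) (m1 : J -> nat) (iota1 : forall l, 'I_(m1 l) -> rhom (Q1 l) C1)
  (pi1 : forall l, 'I_(m1 l) -> rhom C1 (Q1 l)).
Variables (U1 : rep K X1) (out1 : rhom C1 U1) (H1 : forall b, rhom (Q1 b) U1 -> Prop).
Variables (dX2 : Order.disp_t) (X2 : finPOrderType dX2).
Variables (Q2 : J -> rep K X2) (rho2 : forall l b : J, rhom (Q2 b) (Q2 l)).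
Variables (C2 : rep K X2) (m2 : J -> nat) (iota2 : forall l, 'I_(m2 l) -> rhom (Q2 l) C2)
  (pi2 : forall l, 'I_(m2 l) -> rhom C2 (Q2 l)).
Variables (U2 : rep K X2) (out2 : rhom C2 U2) (H2 : forall b, rhom (Q2 b) U2 -> Prop).
Variable th : forall b, rhom (Q1 b) U1 -> rhom (Q2 b) U2.
Variable a : J.
Variable n : nat.
Variable ev : rhom (Q2 a) U2 -> 'rV[K]_n.
Set Implicit Arguments.
Hypotheses (hs1 : side_ax rho1) (hb1 : bip_ax iota1 pi1) (hc1 : cover_ax rho1 out1 H1).
Hypotheses (hs2 : side_ax rho2) (hb2 : bip_ax iota2 pi2) (hc2 : cover_ax rho2 out2 H2).
Hypothesis hi : iso_ax rho1 rho2 H1 H2 th.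
Hypotheses (nz1 : nzb (Q1 a)) (nz2 : nzb (Q2 a)).
Hypothesis ev_add : forall g h, ev (hadd g h) = ev g + ev h.
Hypothesis ev_scale : forall k g, ev (hscale k g) = k *: ev g.
Hypothesis ev_inj : forall g h, natural g -> natural h -> ev g = ev h -> g = h.

Lemma ev_zero : ev (zeroh _ _) = 0.
Proof. by rewrite -(hscale0 (zeroh (Q2 a) U2)) ev_scale scale0r. Qed.

Lemma ev_sum (I : finType) (P : pred I) (f : I -> rhom (Q2 a) U2) :
  ev (hsum P f) = \sum_(i | P i) ev (f i).
Proof.
rewrite hsum_big; apply: (big_morph ev ev_add ev_zero).
Qed.

Let H1_0 := cv_H0 hc1.
Let H1_lin := cv_Hlin hc1.

Lemma th_inj b g h : H1 b g -> H1 b h -> th b g = th b h -> g = h.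
Proof.
case: hi => hm hinj _ Hg Hh e.
have Hd : H1 b (hadd (hscale (-1) h) g) by apply: H1_lin.
have : th b (hadd (hscale (-1) h) g) = zeroh _ _.
  rewrite (th_lin hm) // e; apply: heqE => x.
  by rewrite /hadd /hscale /zeroh scaleN1r addNr.
move/(hinj _ _ Hd) => e3; apply: heqE => x.
have := congr1 (fun f => f x) e3; rewrite /hadd /hscale /zeroh scaleN1r.
by move/eqP; rewrite addrC subr_eq0 => /eqP.
Qed.

Lemma th_Wp w : Wp rho1 H1 w -> Wp rho2 H2 (th a w).
Proof.
case: hi => hm _ _ [u [Hu ->]].
exists (fun b => th b (u b)); split; first by move=> b ba; apply: (th_H hm); exact: Hu.
rewrite (th_sum H1_0 H1_lin hm); last first.
  by move=> b ba; apply: (cv_Hres hc1 (ltW ba)); exact: Hu.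
by apply: eq_hsum => b ba; rewrite (th_nat hm (ltW ba)) //; exact: Hu.
Qed.

Lemma Wp_th w' : Wp rho2 H2 w' -> exists w, Wp rho1 H1 w /\ th a w = w'.
Proof.
case: (hi) => hm _ hsurj [u' [Hu' ->]].
have [u hu] : exists u : forall b, rhom (Q1 b) U1, forall b,
    (b < a)%O -> H1 b (u b) /\ th b (u b) = u' b.
  apply: (@dchoice J (fun b => rhom (Q1 b) U1)
    (fun b u => (b < a)%O -> H1 b u /\ th b u = u' b)) => b.
  case ba: (b < a)%O; last by exists (zeroh _ _).
  by have [g [Hg eg]] := hsurj b _ (Hu' b ba); exists g.
exists (hsum (fun b => (b < a)%O) (fun b => hcomp (rho1 b a) (u b))); split.
  by exists u; split => // b ba; case: (hu b ba).
rewrite (th_sum H1_0 H1_lin hm); last first.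
  by move=> b ba; apply: (cv_Hres hc1 (ltW ba)); case: (hu b ba).
apply: eq_hsum => b ba; case: (hu b ba) => Hb eb.
by rewrite (th_nat hm (ltW ba)) // eb.
Qed.

Let Wr (v : 'rV[K]_n) := exists w, Wp rho2 H2 w /\ ev w = v.

Lemma Wr0 : Wr 0.
Proof. by exists (zeroh _ _); split; [exact: (Wp_zero hc2) | exact: ev_zero]. Qed.

Lemma Wrlin k u v : Wr u -> Wr v -> Wr (k *: u + v).
Proof.
case=> w [Hw <-] [w' [Hw' <-]]; exists (hadd (hscale k w) w'); split.
  exact: (Wp_lin hc2).
by rewrite ev_add ev_scale.
Qed.

Lemma final : m1 a = m2 a.
Proof.
case: (hi) => hm hinj hsurj.
have ni1 : forall l (i : 'I_(m1 l)), natural (iota1 l i) by move=> l i; case: (bp_nat hb1 i).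
have ni2 : forall l (i : 'I_(m2 l)), natural (iota2 l i) by move=> l i; case: (bp_nat hb2 i).
have Hx : forall i : 'I_(m1 a), H1 a (hcomp (iota1 a i) out1) by move=> i; apply: (cv_in hc1).
have Hy : forall j : 'I_(m2 a), H2 a (hcomp (iota2 a j) out2) by move=> j; apply: (cv_in hc2).
pose x i := ev (th a (hcomp (iota1 a i) out1)).
pose y j := ev (hcomp (iota2 a j) out2).
have thcomb : forall c : 'I_(m1 a) -> K,
    th a (hsum xpredT (fun i => hscale (c i) (hcomp (iota1 a i) out1))) =
    hsum xpredT (fun i => hscale (c i) (th a (hcomp (iota1 a i) out1))).
  move=> c; rewrite (th_sum H1_0 H1_lin hm); last first.
    by move=> i _; rewrite -[X in H1 a X]hadd0r; apply: H1_lin => //; exact: H1_0.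
  by apply: eq_hsum => i _; rewrite (th_scale H1_0 hm).
have sx : forall i, exists c : 'I_(m2 a) -> K, Wr (x i - \sum_j c j *: y j).
  move=> i; have [c hc] := T1 hs2 hb2 hc2 (th_H hm (Hx i)).
  exists c; exists (hadd (th a (hcomp (iota1 a i) out1))
     (hscale (-1) (hsum xpredT (fun j => hscale (c j) (hcomp (iota2 a j) out2))))).
  split => //; rewrite ev_add ev_scale ev_sum scaleN1r; congr (_ - _).
  by apply: eq_bigr => j _; rewrite ev_scale.
have sy : forall j, exists c : 'I_(m1 a) -> K, Wr (y j - \sum_i c i *: x i).
  move=> j; have [g [Hg eg]] := hsurj a _ (Hy j).
  have [c hc] := T1 hs1 hb1 hc1 Hg.
  exists c; have := th_Wp hc.
  rewrite (th_add hm) //; last first.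
    rewrite -[X in H1 a X]hadd0r; apply: H1_lin; last exact: H1_0.
    by apply: (H_sum hc1) => i _; rewrite -[X in H1 a X]hadd0r; apply: H1_lin => //; exact: H1_0.
  rewrite (th_scale H1_0 hm); last first.
    by apply: (H_sum hc1) => i _; rewrite -[X in H1 a X]hadd0r; apply: H1_lin => //; exact: H1_0.
  rewrite thcomb eg => hW; eexists; split; first exact: hW.
  rewrite ev_add ev_scale ev_sum scaleN1r; congr (_ - _).
  by apply: eq_bigr => i _; rewrite ev_scale.
have H1c : forall c : 'I_(m1 a) -> K,
    H1 a (hsum xpredT (fun i => hscale (c i) (hcomp (iota1 a i) out1))).
  by move=> c; apply: (H_sum hc1) => i _; rewrite -[X in H1 a X]hadd0r; apply: H1_lin => //; exact: H1_0.
have ix : forall c : 'I_(m1 a) -> K, Wr (\sum_i c i *: x i) -> forall i, c i = 0.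
  move=> c [w [Hw ew]].
  have e1 : \sum_i c i *: x i = ev (th a (hsum xpredT (fun i => hscale (c i) (hcomp (iota1 a i) out1)))).
    by rewrite thcomb ev_sum; apply: eq_bigr => i _; rewrite ev_scale.
  have e2 : th a (hsum xpredT (fun i => hscale (c i) (hcomp (iota1 a i) out1))) = w.
    apply: ev_inj; [exact: (cv_Hnat hc2 (th_H hm (H1c c))) | exact: (cv_Hnat hc2 (Wp_H hc2 Hw)) |].
    by rewrite -e1 ew.
  have [w1 [Hw1 ew1]] := Wp_th Hw.
  have e3 := th_inj (H1c c) (Wp_H hc1 Hw1) (etrans e2 (esym ew1)).
  by apply: (T2 hs1 hb1 hc1 nz1); rewrite e3.
have iy : forall c : 'I_(m2 a) -> K, Wr (\sum_j c j *: y j) -> forall j, c j = 0.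
  move=> c [w [Hw ew]]; apply: (T2 hs2 hb2 hc2 nz2).
  have H2c : H2 a (hsum xpredT (fun j => hscale (c j) (hcomp (iota2 a j) out2))).
    by apply: (H_sum hc2) => j _; rewrite -[X in H2 a X]hadd0r; apply: (cv_Hlin hc2) => //; exact: (cv_H0 hc2).
  have -> : hsum xpredT (fun j => hscale (c j) (hcomp (iota2 a j) out2)) = w => //.
  apply: ev_inj; [exact: (cv_Hnat hc2 H2c) | exact: (cv_Hnat hc2 (Wp_H hc2 Hw)) |].
  by rewrite ew ev_sum; apply: eq_bigr => j _; rewrite ev_scale.
apply/eqP; rewrite eqn_leq; apply/andP; split.
  exact: (count_le Wr0 Wrlin sx sy ix).
exact: (count_le Wr0 Wrlin sy sx iy).
Qed.

End Final.

Set Implicit Arguments.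
Unset Strict Implicit.
Unset Printing Implicit Defensive.
Import Order.TTheory GRing.Theory.
Local Open Scope ring_scope.

Section FreeJ.
Variable K : fieldType.
Variables (dJ : Order.disp_t) (J : finPOrderType dJ).

Lemma fd_refl (b : J) : free_dim b b = 1%N.
Proof. by rewrite /free_dim lexx. Qed.

Lemma fd_le (b x : J) : (0 < free_dim b x)%N -> (b <= x)%O.
Proof. by rewrite /free_dim; case: (b <= x)%O. Qed.

Lemma fd_eq (b x : J) : (b <= x)%O -> free_dim b x = 1%N.
Proof. by rewrite /free_dim => ->. Qed.

Lemma ord_fd (b x : J) (i j : 'I_(free_dim b x)) : i = j.
Proof.
apply: val_inj; have h : (free_dim b x <= 1)%N by exact: leq_b1.
have ei : (i : nat) = 0%N by apply/eqP; rewrite -leqn0 -ltnS; exact: leq_trans (ltn_ord i) h.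
have ej : (j : nat) = 0%N by apply/eqP; rewrite -leqn0 -ltnS; exact: leq_trans (ltn_ord j) h.
by rewrite /= ei ej.
Qed.

Definition i0 (b : J) : 'I_(free_dim b b) := cast_ord (esym (fd_refl b)) ord0.

Definition frho (l b : J) : rhom (free_rep K b) (free_rep K l) :=
  fun x => const_mx 1.

Definition evJ (Y : rep K J) (b : J) (g : rhom (free_rep K b) Y) : 'rV[K]_(rdim Y b) :=
  row (i0 b) (g b).

Lemma sum_fd (b x : J) (i : 'I_(free_dim b x)) (F : 'I_(free_dim b x) -> K) :
  \sum_(t < free_dim b x) F t = F i.
Proof.
have bx : (b <= x)%O by apply: fd_le; apply: leq_ltn_trans (ltn_ord i).
rewrite (bigD1 i) //= big1 ?addr0 // => t; by rewrite (ord_fd t i) eqxx.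
Qed.

Lemma free_nat_val (Y : rep K J) (b : J) (g : rhom (free_rep K b) Y) : natural g ->
  forall x (i : 'I_(free_dim b x)) j, g x i j = (evJ g *m rmap Y b x) 0 j.
Proof.
move=> ng x i j.
have bx : (b <= x)%O by apply: fd_le; apply: leq_ltn_trans (ltn_ord i).
have := ng b x bx => /matrixP /(_ (i0 b) j).
rewrite !mxE (sum_fd i) mxE mul1r => ->.
by apply: eq_bigr => t _; rewrite /evJ mxE.
Qed.

Lemma evJ_inj (Y : rep K J) (b : J) (g h : rhom (free_rep K b) Y) :
  natural g -> natural h -> evJ g = evJ h -> g = h.
Proof.
move=> ng nh e; apply: heqE => x; apply/matrixP => i j.
by rewrite (free_nat_val ng) (free_nat_val nh) e.
Qed.

Lemma evJ_add (Y : rep K J) (b : J) (g h : rhom (free_rep K b) Y) :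
  evJ (hadd g h) = evJ g + evJ h.
Proof. by apply/rowP => j; rewrite !mxE. Qed.

Lemma evJ_scale (Y : rep K J) (b : J) k (g : rhom (free_rep K b) Y) :
  evJ (hscale k g) = k *: evJ g.
Proof. by apply/rowP => j; rewrite !mxE. Qed.

Lemma const1_mul p q r : (p = 0%N \/ r = 0%N \/ q = 1%N) ->
  (const_mx 1 : 'M[K]_(p, q)) *m (const_mx 1 : 'M[K]_(q, r)) = const_mx 1.
Proof.
case=> [->|[->|->]]; apply/matrixP => i j; try (by case: i); try (by case: j).
by rewrite !mxE big_ord1 !mxE mulr1.
Qed.

Lemma nzb_free (a : J) : nzb (free_rep K a).
Proof. by apply/existsP; exists a; rewrite /= fd_refl. Qed.

Lemma frho_side : side_ax (Q := @free_rep K _ J) frho.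
Proof.
split.
- move=> l b lb x y xy; rewrite /frho /=; rewrite !const1_mul //.
    case bx: (b <= x)%O; last by left; rewrite /free_dim bx.
    by right; right; apply: fd_eq; apply: le_trans lb bx.
  case bx: (b <= x)%O; last by left; rewrite /free_dim bx.
  case ly: (l <= y)%O; last by right; left; rewrite /free_dim ly.
  by right; right; apply: fd_eq; apply: le_trans bx xy.
- by move=> b; apply: heqE => x; rewrite /frho /idh free_map_id.
- move=> l b a lb ba; apply: heqE => x; rewrite /frho /Defs.comp const1_mul //.
  case ax: (a <= x)%O; last by left; rewrite /= /free_dim ax.
  by right; right; rewrite /=; apply: fd_eq; apply: le_trans ba ax.
- move=> l b h nh.
  have key : forall x (i : 'I_(free_dim b x)) j,
      h x i j = \sum_(s < free_dim l b) h b (i0 b) s.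
    move=> x i j.
    have bx : (b <= x)%O by apply: fd_le; apply: leq_ltn_trans (ltn_ord i).
    have := nh b x bx => /matrixP /(_ (i0 b) j).
    rewrite !mxE (sum_fd i) mxE mul1r => ->.
    by apply: eq_bigr => s _; rewrite mxE mulr1.
  split.
    move=> lb; have j0 : 'I_(free_dim l b) by rewrite fd_eq //; exact: ord0.
    exists (h b (i0 b) j0); apply: heqE => x; apply/matrixP => i j.
    by rewrite key (sum_fd j0) /hscale /frho !mxE mulr1.
  move=> nlb; apply: heqE => x; apply/matrixP => i j.
  rewrite key /zeroh mxE big1 // => s _; exfalso.
  by case: s => s0 hs0; move: hs0; rewrite /free_dim (negbTE nlb).
Qed.

Lemma frho_flat : side_flat (Q := @free_rep K _ J) frho.
Proof.
move=> l b lb _ /(congr1 (fun f => f b)) /matrixP.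
have i : 'I_(free_dim b b) by exact: i0 b.
have j : 'I_(free_dim l b) by rewrite fd_eq //; exact: ord0.
by move/(_ i j); rewrite /frho /zeroh !mxE => /eqP; rewrite oner_eq0.
Qed.

End FreeJ.

Set Implicit Arguments.
Unset Strict Implicit.
Unset Printing Implicit Defensive.
Import Order.TTheory GRing.Theory.
Local Open Scope ring_scope.

Section PSide.
Variable K : fieldType.
Variables (dI : Order.disp_t) (I : finPOrderType dI).
Variables (dJ : Order.disp_t) (J : finPOrderType dJ).
Variable P : cofunctor K I J.

Lemma pside : thin P -> side_ax (Defs.pmap P).
Proof.
move=> hth; split.
- by move=> l b lb; apply: Defs.pmap_nat.
- by move=> b; apply: heqE; apply: Defs.pmap_id.
- by move=> l b a lb ba; apply: heqE; apply: Defs.pmap_comp.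
move=> l b h nh; have [h1 h2] := hth l b h nh; split.
  by move=> lb; have [k hk] := h1 lb; exists k; apply: heqE.
by move=> nlb; apply: heqE; apply: h2.
Qed.

Lemma flat_thin : flat P -> thin P.
Proof.
move=> hf a b; case nz: (nzb (pobj P a)).
  by case: (hf a (elimT (nzbP _) nz) b).
move=> f nf; split.
  by move=> _; exists 0; move=> x; rewrite (rhom_to_zero f (fun x => 0 *: Defs.pmap P a b x)) ?nz.
by move=> _ x; rewrite (rhom_to_zero f (zeroh _ _)) ?nz.
Qed.

Lemma pflat : flat P -> side_flat (Defs.pmap P).
Proof.
move=> hf l b lb nz e; have [_ hi] := hf l (elimT (nzbP _) nz) b.
by apply: (hi lb); rewrite e.
Qed.

End PSide.

Set Implicit Arguments.
Unset Strict Implicit.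
Unset Printing Implicit Defensive.
Import Order.TTheory GRing.Theory.
Local Open Scope ring_scope.

Section MinRes.
Variable K : fieldType.
Variables (dX : Order.disp_t) (X : finPOrderType dX).
Variables (dJ : Order.disp_t) (J : finPOrderType dJ).
Unset Implicit Arguments.
Variables (Q : J -> rep K X) (rho : forall l b : J, rhom (Q b) (Q l)).
Variables (N : rep K X) (C : nat -> rep K X) (mult : nat -> J -> nat)
  (dd : forall n, rhom (C n.+1) (C n)) (eps : rhom (C 0%N) N).
Set Implicit Arguments.

Definition Hd (d : nat) : forall b, rhom (Q b) (res_tgt N C d) -> Prop :=
  match d as d0 return forall b, rhom (Q b) (res_tgt N C d0) -> Prop with
  | 0%N => fun b g => natural g
  | d'.+1 => fun b g => natural g /\ hcomp g (res_out eps dd d') = zeroh _ _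
  end.

Hypothesis hr : is_min_res Q N C mult dd eps.

Lemma bip_of n : exists (iota : forall l, 'I_(mult n l) -> rhom (Q l) (C n))
  (pi : forall l, 'I_(mult n l) -> rhom (C n) (Q l)), bip_ax iota pi.
Proof.
case: hr => [[hb _] _ _ _ _].
have [iota [pi [hn [hd [ho hs]]]]] := hb n.
exists iota, pi; split => //.
- by move=> l i j; apply: heqE; apply: hd.
- by move=> l l' i j ne; apply: heqE; apply: ho.
Qed.

Lemma out_nat d : natural (res_out eps dd d).
Proof. by case: hr => [[_ [ne nd]] _ _ _ _]; case: d => [|d] //=. Qed.

Hypothesis hs : side_ax rho.

Lemma cover_of d : cover_ax rho (res_out eps dd d) (@Hd d).
Proof.
case: hr => [[_ [ne nd]] hcx hl0 hln hmin].
have onat := out_nat.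
split.
- exact: onat.
- by case: d => [|d] b g //= [].
- case: d => [|d] b /=; first exact: natural_zero.
  by split; [exact: natural_zero | rewrite hcomp0l].
- case: d => [|d] b k g h /=.
    by move=> ng nh; apply: natural_add => //; apply: natural_scale.
  move=> [ng eg] [nh eh]; split; first by apply: natural_add => //; apply: natural_scale.
  by rewrite hcompDl hcompZl eg eh hscaler0 hadd0r.
- case: d => [|d] b a g ba /=.
    by move=> ng; apply: natural_comp => //; exact: (sd_nat hs ba).
  move=> [ng eg]; split; first by apply: natural_comp => //; exact: (sd_nat hs ba).
  by rewrite hcompA eg hcomp0r.
- case: d => [|d] b h nh /=; first by apply: natural_comp.
  split; first by apply: natural_comp => //; exact: (onat d.+1).
  by rewrite hcompA (heqE (hcx d)) hcomp0r.
- case: d => [|d] b g /=.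
    by move=> ng; have [h [nh eh]] := hl0 b g ng; exists h; split => //; apply: heqE.
  move=> [ng eg]; have [h [nh eh]] := hln d b g ng (fun x => congr1 (fun f => f x) eg).
  by exists h; split => //; apply: heqE.
- move=> e ne' he; apply: hmin => //; by rewrite he.
Qed.

End MinRes.

Set Implicit Arguments.
Unset Strict Implicit.
Unset Printing Implicit Defensive.
Import Order.TTheory GRing.Theory.
Local Open Scope ring_scope.

Section Theta0.
Variable K : fieldType.
Variables (dI : Order.disp_t) (I : finPOrderType dI).
Variables (dJ : Order.disp_t) (J : finPOrderType dJ).
Variables (P : cofunctor K I J) (M : rep K I) (G : rep K J).
Unset Implicit Arguments.
Variable phi : forall b : J, 'rV[K]_(rdim G b) -> rhom (pobj P b) M.
Set Implicit Arguments.
Hypothesis hR : represents_R P M G phi.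

Definition thJP (b : J) (g : rhom (free_rep K b) G) : rhom (pobj P b) M :=
  phi b (evJ g).

Lemma theta0' : iso_ax (@frho K _ J) (Defs.pmap P)
   (fun b (g : rhom (free_rep K b) G) => natural g)
   (fun b (g : rhom (pobj P b) M) => natural g) thJP.
Proof.
case: hR => hnat hlin hinj hsurj hres.
split; first split.
- by move=> b g _; apply: hnat.
- move=> b k g h _ _; rewrite /thJP evJ_add evJ_scale; apply: heqE; exact: hlin.
- move=> b a g ba ng; rewrite /thJP.
  have -> : evJ (hcomp (frho K b a) g) = evJ g *m rmap G b a.
    apply/rowP => j; rewrite {1}/evJ mxE /Defs.comp /frho mxE.
    rewrite (sum_fd (cast_ord (esym (fd_eq ba)) ord0)) mxE mul1r.
    by rewrite (free_nat_val ng).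
  by apply: heqE; apply: hres.
- move=> b g ng e; have := hinj b (evJ g); rewrite /thJP in e; rewrite e => /(_ (fun x => erefl)).
  move=> e2; apply: evJ_inj => //; first exact: natural_zero.
  by rewrite e2; apply/rowP => j; rewrite !mxE.
- move=> b g ng; have [v hv] := hsurj b g ng.
  pose g' : rhom (free_rep K b) G := fun x => \matrix_(i, j) (v *m rmap G b x) 0 j.
  have ng' : natural g'.
    move=> x y xy; apply/matrixP => i j.
    have bx : (b <= x)%O by apply: fd_le; apply: leq_ltn_trans (ltn_ord i).
    have bxy : (b <= y)%O by apply: le_trans bx xy.
    rewrite !mxE (sum_fd (cast_ord (esym (fd_eq bxy)) ord0)) !mxE mul1r.
    transitivity ((v *m rmap G b y) 0 j); first by rewrite mxE.
    rewrite (rmap_comp G bx xy) mulmxA mxE; apply: eq_bigr => s _; by rewrite /g' mxE.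
  exists g'; split => //; rewrite /thJP.
  have -> : evJ g' = v by apply/rowP => j; rewrite /evJ mxE /g' mxE rmap_id mulmx1.
  exact: heqE.
Qed.

Lemma theta0 : exists th : forall b, rhom (pobj P b) M -> rhom (free_rep K b) G,
  iso_ax (Defs.pmap P) (@frho K _ J)
   (fun b (g : rhom (pobj P b) M) => natural g)
   (fun b (g : rhom (free_rep K b) G) => natural g) th.
Proof.
have [th' [hi _ _]] := iso_inv (H1 := fun b (g : rhom (free_rep K b) G) => natural g)
  (H2 := fun b (g : rhom (pobj P b) M) => natural g)
  (fun b => natural_zero _ _)
  (fun b k g h ng nh => natural_add (natural_scale k ng) nh)
  (fun b a g ba ng => natural_comp (sd_nat (frho_side K J) ba) ng)
  (fun b k g h ng nh => natural_add (natural_scale k ng) nh)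
  (fun b a g ba ng => natural_comp (Defs.pmap_nat P ba) ng) theta0'.
by exists th'.
Qed.

End Theta0.

Local Close Scope ring_scope.
Unset Implicit Arguments.

Theorem proposition5p13 (K : fieldType)
  (dI : Order.disp_t) (I : finPOrderType dI)
  (dJ : Order.disp_t) (J : finPOrderType dJ)
  (P : cofunctor K I J) (M : rep K I) :
  (thin P ->
    forall a : J, nonzero (pobj P a) ->
    forall (C : nat -> rep K I) (mult : nat -> J -> nat)
           (dd : forall n, rhom (C n.+1) (C n)) (eps : rhom (C 0%N) M),
      is_min_res (pobj P) M C mult dd eps ->
    forall (G : rep K J) (phi : forall b : J, 'rV[K]_(rdim G b) -> rhom (pobj P b) M),
      represents_R P M G phi ->
    forall (C' : nat -> rep K J) (mult' : nat -> J -> nat)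
           (dd' : forall n, rhom (C' n.+1) (C' n)) (eps' : rhom (C' 0%N) G),
      is_min_res (@free_rep K _ J) G C' mult' dd' eps' ->
      mult 0%N a = mult' 0%N a)
  /\
  (flat P ->
    forall (d : nat) (a : J), nonzero (pobj P a) ->
    forall (C : nat -> rep K I) (mult : nat -> J -> nat)
           (dd : forall n, rhom (C n.+1) (C n)) (eps : rhom (C 0%N) M),
      is_min_res (pobj P) M C mult dd eps ->
    forall (G : rep K J) (phi : forall b : J, 'rV[K]_(rdim G b) -> rhom (pobj P b) M),
      represents_R P M G phi ->
    forall (C' : nat -> rep K J) (mult' : nat -> J -> nat)
           (dd' : forall n, rhom (C' n.+1) (C' n)) (eps' : rhom (C' 0%N) G),
      is_min_res (@free_rep K _ J) G C' mult' dd' eps' ->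
      mult d a = mult' d a).
Proof.
split.
- move=> hth a nza C mult dd eps hr G phi hR C' mult' dd' eps' hr'.
  have hs1 := pside hth.
  have hs2 := frho_side K J.
  have hc1 := cover_of hr hs1 0.
  have hc2 := cover_of hr' hs2 0.
  have [iota1 [pi1 hb1]] := bip_of hr 0.
  have [iota2 [pi2 hb2]] := bip_of hr' 0.
  have [th hi] := theta0 hR.
  exact: (final hs1 hb1 hc1 hs2 hb2 hc2 hi (introT (nzbP _) nza) (nzb_free K a)
     (@evJ_add K _ J _ a) (@evJ_scale K _ J _ a) (@evJ_inj K _ J _ a)).
- move=> hf d a nza C mult dd eps hr G phi hR C' mult' dd' eps' hr'.
  have hs1 := pside (flat_thin hf).
  have hf1 := pflat hf.
  have hs2 := frho_side K J.
  have hf2 := @frho_flat K _ J.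
  have [th hi] : exists th, iso_ax (Defs.pmap P) (@frho K _ J)
      (@Hd _ _ _ _ _ (pobj P) M C dd eps d) (@Hd _ _ _ _ _ (@free_rep K _ J) G C' dd' eps' d) th.
    elim: d => [|d [th hi]]; first exact: (theta0 hR).
    have hc1 := cover_of hr hs1 d.
    have hc2 := cover_of hr' hs2 d.
    have [iota1 [pi1 hb1]] := bip_of hr d.
    have [iota2 [pi2 hb2]] := bip_of hr' d.
    exact: (step hs1 hf1 hb1 hc1 hs2 hf2 hb2 hc2 hi).
  have hc1 := cover_of hr hs1 d.
  have hc2 := cover_of hr' hs2 d.
  have [iota1 [pi1 hb1]] := bip_of hr d.
  have [iota2 [pi2 hb2]] := bip_of hr' d.
  exact: (final hs1 hb1 hc1 hs2 hb2 hc2 hi (introT (nzbP _) nza) (nzb_free K a)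
     (@evJ_add K _ J _ a) (@evJ_scale K _ J _ a) (@evJ_inj K _ J _ a)).
Qed.
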